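(* Let $p\ge2$ be an integer. (1) (With bias.) There exist $W\in\mathbb{R}^{2\times p}$, $V\in\mathbb{R}^{p\times 2}$, $b\in\mathbb{R}^2$ such that the network $s^\theta(x)=V\sin(Wx+b)$ satisfies $\mathbb{P}_{(X,Y)\sim\mathcal{D}_m}[h_\theta(X)=Y]=1$ for every integer $m\ge2$. (2) (Without bias.) Let $d=\lfloor (p-1)/2\rfloor$. There exist $W\in\mathbb{R}^{d\times p}$, $V\in\mathbb{R}^{p\times d}$ such that the network $s^\theta(x)=V\sin(Wx)$ satisfies, for every integer $m\ge 2$: if $p$ is odd then $\mathbb{P}_{(X,Y)\sim\mathcal{D}_m}[h_\theta(X)=Y]\ge 1-\frac1p$, and if $p$ is even then $\mathbb{P}_{(X,Y)\sim\mathcal{D}_m}[h_\theta(X)=Y]\ge 1-\frac2p$.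
   Context: Let $[p]=\{0,1,\dots,p-1\}$ and let $e_r$ ($r\in[p]$) be the standard basis vectors of $\mathbb{R}^p$. For an integer $m\ge1$, let $\mathcal{X}_m=\{x\in\{0,1,\dots,m\}^p:\ \|x\|_1=m\}$. The distribution $\mathcal{D}_m$ on $\mathcal{X}_m\times[p]$ is that of $(X,Y)$ where $s_1,\dots,s_m$ are i.i.d. uniform on $[p]$, $X=\sum_{i=1}^m e_{s_i}$ and $Y=(\sum_{i=1}^m s_i)\bmod p$. The function $\sin$ is applied entrywise. For a score vector $s^\theta(x)\in\mathbb{R}^p$ with coordinates indexed by $[p]$, the predictor is $h_\theta(x)=\ell$ if $s^\theta_\ell(x)>s^\theta_k(x)$ for all $k\ne\ell$, and $h_\theta(x)=\bot$ (an invalid prediction, never equal to any label) otherwise. *)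

(* Defs.v *)
From HB Require Import structures.
From mathcomp Require Import all_boot all_order all_algebra.
From mathcomp Require Import all_classical all_reals all_analysis.
Set Implicit Arguments. Unset Strict Implicit. Unset Printing Implicit Defensive.
Import Order.TTheory GRing.Theory Num.Theory.
Local Open Scope ring_scope.

Section Defs.
Variable R : realType.

Definition e_vec (p : nat) (r : 'I_p) : 'cV[R]_p := delta_mx r ord0.

Definition sampleX (p m : nat) (s : m.-tuple 'I_p) : 'cV[R]_p :=
  \sum_(i < m) e_vec (tnth s i).

Definition sampleY (p m : nat) (s : m.-tuple 'I_p) : nat :=
  ((\sum_(i < m) nat_of_ord (tnth s i)) %% p)%N.

Definition sin_mx (n : nat) (A : 'cV[R]_n) : 'cV[R]_n := map_mx sin A.

(* predictor: Some l if l is the unique strict argmax of the scores, None (= bot) otherwise *)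
Definition predictor (p : nat) (sc : 'cV[R]_p) : option 'I_p :=
  [pick l : 'I_p | [forall k : 'I_p, (k != l) ==> (sc k ord0 < sc l ord0)]].

Definition correct (p : nat) (sc : 'cV[R]_p) (y : nat) : bool :=
  if predictor sc is Some l then nat_of_ord l == y else false.

(* P_{(X,Y) ~ D_m}[h(X) = Y] where s_1..s_m iid uniform on [p] *)
Definition accuracy (p m : nat) (score : 'cV[R]_p -> 'cV[R]_p) : R :=
  (\sum_(s : m.-tuple 'I_p) (correct (score (sampleX s)) (sampleY s))%:R)
    / (p ^ m)%:R.

Definition net_bias (p k : nat) (W : 'M[R]_(k, p)) (V : 'M[R]_(p, k)) (b : 'cV[R]_k)
  (x : 'cV[R]_p) : 'cV[R]_p := V *m sin_mx (W *m x + b).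

Definition net_nobias (p k : nat) (W : 'M[R]_(k, p)) (V : 'M[R]_(p, k))
  (x : 'cV[R]_p) : 'cV[R]_p := V *m sin_mx (W *m x).

End Defs.

(* Main.v *)
Require Import Defs.
From HB Require Import structures.
From mathcomp Require Import all_boot all_order all_algebra.
From mathcomp Require Import all_classical all_reals all_analysis.
From mathcomp Require Import ring lra zify.
Import Order.TTheory GRing.Theory Num.Theory.
Local Open Scope ring_scope.

Section Trig.
Variable R : realType.
Variable p : nat.
Hypothesis p_gt0 : (0 < p)%N.

Definition om : R := pi *+ 2 / p%:R.
Definition Sn (n : nat) : R := sin (om * n%:R).
Definition Cn (n : nat) : R := cos (om * n%:R).

Lemma p_R_gt0 : 0 < p%:R :> R.
Proof. by rewrite ltr0n. Qed.

Lemma om_p : om * p%:R = pi *+ 2.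
Proof. rewrite /om mulrVK //; by rewrite unitfE pnatr_eq0 -lt0n. Qed.

Lemma sin_per (x : R) q : sin (x + (pi *+ 2) * q%:R) = sin x.
Proof.
elim: q => [|q IH]; first by rewrite mulr0 addr0.
by rewrite -[q.+1]addn1 natrD mulrDr mulr1 addrA sinD2pi.
Qed.

Lemma cos_per (x : R) q : cos (x + (pi *+ 2) * q%:R) = cos x.
Proof.
elim: q => [|q IH]; first by rewrite mulr0 addr0.
by rewrite -[q.+1]addn1 natrD mulrDr mulr1 addrA cosD2pi.
Qed.

Lemma om_mod n : om * n%:R = om * (n %% p)%:R + (pi *+ 2) * (n %/ p)%:R.
Proof.
rewrite {1}(divn_eq n p) natrD natrM mulrDr addrC; congr (_ + _).
by rewrite mulrA mulrAC om_p.
Qed.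

Lemma Sn_mod n : Sn n = Sn (n %% p).
Proof. by rewrite /Sn om_mod sin_per. Qed.
Lemma Cn_mod n : Cn n = Cn (n %% p).
Proof. by rewrite /Cn om_mod cos_per. Qed.

Lemma Sn_eqmod n1 n2 : n1 = n2 %[mod p] -> Sn n1 = Sn n2.
Proof. by move=> h; rewrite Sn_mod h -Sn_mod. Qed.
Lemma Cn_eqmod n1 n2 : n1 = n2 %[mod p] -> Cn n1 = Cn n2.
Proof. by move=> h; rewrite Cn_mod h -Cn_mod. Qed.

Lemma cos_neq1 (x : R) : 0 < x < pi *+ 2 -> cos x != 1.
Proof.
move=> /andP[x0 x2].
have -> : x = (x / 2) *+ 2 by rewrite -mulr_natr mulfVK // pnatr_eq0.
rewrite cos_mulr2n cos2sin2.
have : 0 < sin (x / 2).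
  apply: sin_gt0_pi; apply/andP; split; first by rewrite divr_gt0.
  by rewrite ltr_pdivrMr // mulr_natr.
move=> h; apply/eqP => e.
have : sin (x / 2) ^+ 2 = 0.
  move: e; rewrite -mulr_natr; set u := sin (x / 2) ^+ 2; lra.
by move/eqP; rewrite expf_eq0 /= => /eqP h0; move: h; rewrite h0 ltxx.
Qed.

Lemma om_gt0 : 0 < om.
Proof. by rewrite /om divr_gt0 ?ltr0n // mulrn_wgt0 // pi_gt0. Qed.

Lemma SC_inj a b : (a < p)%N -> (b < p)%N -> Sn a = Sn b -> Cn a = Cn b -> a = b.
Proof.
wlog ab : a b / (a <= b)%N.
  move=> H ha hb hs hc; case: (leqP a b) => h; first exact: H.
  by symmetry; apply: H => //; apply: ltnW.
move=> ha hb hs hc; apply/eqP; rewrite eqn_leq ab /=; case: (leqP b a) => // hlt; exfalso.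
have : cos (om * (b - a)%:R) != 1.
  apply: cos_neq1; apply/andP; split.
    by rewrite mulr_gt0 ?om_gt0 // ltr0n subn_gt0.
  rewrite -om_p ltr_pM2l ?om_gt0 // ltr_nat.
  by apply: leq_ltn_trans hb; apply: leq_subr.
have e : cos (om * (b - a)%:R) = Cn b * Cn a + Sn b * Sn a.
  by rewrite natrB // mulrBr cosB.
rewrite e -hs -hc /Sn /Cn => /negP; apply; apply/eqP.
by move: (cos2Dsin2 (om * a%:R)); rewrite !expr2.
Qed.
End Trig.

Section Trig2.
Variable R : realType.
Variable p : nat.
Hypothesis p_gt0 : (0 < p)%N.

Lemma Sn0 : Sn R p 0 = 0.
Proof. by rewrite /Sn mulr0 sin0. Qed.
Lemma Cn0 : Cn R p 0 = 1.
Proof. by rewrite /Cn mulr0 cos0. Qed.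

Lemma Sn2 y : Sn R p (2 * y) = (Cn R p y * Sn R p y) *+ 2.
Proof. by rewrite /Sn /Cn natrM mulrCA mulr_natl sin_mulr2n. Qed.
Lemma Cn2 y : Cn R p (2 * y) = Cn R p y ^+ 2 *+ 2 - 1.
Proof. by rewrite /Cn natrM mulrCA mulr_natl cos_mulr2n. Qed.

Lemma S_ne0 y : (y < p)%N -> y <> 0%N -> (2 * y <> p)%N -> Sn R p y != 0.
Proof.
move=> hy y0 y2; apply/eqP => s0.
have hz : ((2 * y) %% p < p)%N by rewrite ltn_pmod.
have e : ((2 * y) %% p = 0)%N.
  apply: (@SC_inj R p p_gt0 _ 0%N hz p_gt0).
    by rewrite -Sn_mod // Sn2 s0 mulr0 mul0rn Sn0.
  rewrite -Cn_mod // Cn2 Cn0 cos2sin2 -/(Sn R p y) s0 expr0n /= subr0.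
  by rewrite -mulr_natr; lra.
move: (divn_eq (2 * y) p); rewrite e addn0.
case: (2 * y %/ p)%N => [|[|q]]; first by lia.
  by rewrite mul1n.
by nia.
Qed.

End Trig2.

Section Count.
Variable p : nat.
Hypothesis p_gt0 : (0 < p)%N.

Lemma sampleY_cons m (s : m.+1.-tuple 'I_p) :
  sampleY s = ((thead s + \sum_(i < m) tnth [tuple of behead s] i) %% p)%N.
Proof.
rewrite /sampleY big_ord_recl; congr ((_ + _) %% p)%N.
apply: eq_bigr => i _; rewrite tnth_behead; congr (nat_of_ord (tnth s _)).
by apply: val_inj; rewrite /= inordK // ltnS.
Qed.

Lemma card_res m r :
  (#|[set s : m.+1.-tuple 'I_p | sampleY s == r]| <= p ^ m)%N.
Proof.
set A := [set s : m.+1.-tuple 'I_p | sampleY s == r].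
have inj : {in A &, injective (fun s : m.+1.-tuple 'I_p => [tuple of behead s])}.
  move=> s1 s2; rewrite !inE => /eqP h1 /eqP h2 eb.
  have hb : behead s1 = behead s2 by have := congr1 val eb.
  have hh : thead s1 = thead s2.
    move: h1 h2; rewrite !sampleY_cons eb => <- /eqP.
    rewrite eqn_modDr !modn_small ?ltn_ord // => /eqP e.
    by apply: val_inj.
  rewrite (tuple_eta s1) (tuple_eta s2) hh; apply: val_inj => /=.
  by rewrite hb.
rewrite -(card_in_imset inj).
apply: leq_trans (max_card _) _.
by rewrite card_tuple card_ord.
Qed.

Lemma card_res_seq m (rs : seq nat) :
  (#|[set s : m.+1.-tuple 'I_p | sampleY s \in rs]| <= size rs * p ^ m)%N.
Proof.
elim: rs => [|r rs IH].
  by rewrite leqn0 cards_eq0; apply/eqP/setP => s; rewrite !inE.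
rewrite (_ : [set _ | _] = [set s : m.+1.-tuple 'I_p | sampleY s == r] :|:
      [set s : m.+1.-tuple 'I_p | sampleY s \in rs]); last first.
  by apply/setP => s; rewrite !inE.
apply: leq_trans (leq_card_setU _ _) _.
by rewrite /= mulSn leq_add // card_res.
Qed.

End Count.

Section Acc.
Variable R : realType.
Variable p : nat.
Hypothesis p_gt0 : (0 < p)%N.

Lemma acc_le1 m (f : 'cV[R]_p -> 'cV[R]_p) : accuracy m f <= 1.
Proof.
rewrite /accuracy -natr_sum ler_pdivrMr ?ltr0n ?expn_gt0 ?p_gt0 // mul1r ler_nat.
apply: (@leq_trans (\sum_(s : m.-tuple 'I_p) 1)%N).
  by apply: leq_sum => s _; case: (correct _ _).
rewrite (sum1dep_card (fun _ => true)).
by apply: leq_trans (max_card _) _; rewrite card_tuple card_ord.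
Qed.

Lemma acc_ge m (f : 'cV[R]_p -> 'cV[R]_p) (rs : seq nat) : (0 < m)%N ->
  (forall s : m.-tuple 'I_p, sampleY s \notin rs -> correct (f (sampleX R s)) (sampleY s)) ->
  1 - (size rs)%:R / p%:R <= accuracy m f.
Proof.
case: m => // m _ H.
set N := (\sum_(s : m.+1.-tuple 'I_p) (correct (f (sampleX R s)) (sampleY s) : nat))%N.
set bad := [set s : m.+1.-tuple 'I_p | sampleY s \in rs].
have hN : (#|~: bad| <= N)%N.
  rewrite -sum1dep_card big_mkcond /=; apply: leq_sum => s _.
  case: ifP => //; rewrite !inE => /H.
  by case: (correct _ _).
have hb := @card_res_seq p m rs.
have hc := cardsC bad.
rewrite card_tuple card_ord -/bad in hc.
have key : (p ^ m.+1 <= N + size rs * p ^ m)%N.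
  by rewrite -hc addnC leq_add.
rewrite /accuracy -natr_sum -/N.
have hP : 0 < (p ^ m)%:R :> R by rewrite ltr0n expn_gt0 p_gt0.
have hp : 0 < p%:R :> R by rewrite ltr0n.
rewrite expnS natrM ler_pdivlMr ?mulr_gt0 //.
have : ((p ^ m.+1)%:R <= (N + size rs * p ^ m)%:R :> R) by rewrite ler_nat.
rewrite expnS !natrD !natrM => h2.
have -> : (1 - (size rs)%:R / p%:R) * (p%:R * (p ^ m)%:R) =
   p%:R * (p ^ m)%:R - (size rs)%:R * (p ^ m)%:R :> R.
  by field; rewrite gt_eqF.
lra.
Qed.

End Acc.

Section Key.
Variable R : realType.

Definition scf (sl cl sy cy : R) (b : bool) : R :=
  Num.sg sl * ((3 - cl ^+ 2) * sy + (if b then 2 * cl * cy * sy else 0)).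

Definition Gf (c cy : R) (b : bool) : R := (3 - c ^+ 2) + (if b then 2 * c * cy else 0).

Lemma diff_form (sl cl sy cy : R) (b : bool) :
  scf sy cy sy cy b - scf sl cl sy cy b = sy * (Num.sg sy * Gf cy cy b - Num.sg sl * Gf cl cy b).
Proof. by rewrite /scf /Gf; case: b; ring. Qed.

Lemma Gpos (c cy : R) b : c ^+ 2 <= 1 -> cy ^+ 2 <= 1 -> 0 < Gf c cy b + Gf cy cy b.
Proof.
move=> h1 h2; rewrite /Gf; case: b.
  have : 0 <= (c + cy) ^+ 2 by rewrite sqr_ge0.
  lra.
have := sqr_ge0 c; have := sqr_ge0 cy; lra.
Qed.

Lemma Gpos1 (cy : R) b : cy ^+ 2 <= 1 -> 0 < Gf cy cy b.
Proof.
move=> h2; rewrite /Gf; case: b.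
  have := sqr_ge0 cy; lra.
lra.
Qed.

Lemma Gdiff (cl cy : R) : cl != cy -> 0 < Gf cy cy true - Gf cl cy true.
Proof.
move=> ne; have : 0 < (cl - cy) ^+ 2 by rewrite exprn_even_gt0 //= subr_eq0.
rewrite /Gf; lra.
Qed.

Lemma key (sl cl sy cy : R) (b : bool) : sy != 0 -> cl ^+ 2 <= 1 -> cy ^+ 2 <= 1 ->
  (Num.sg sl = Num.sg sy -> b /\ cl != cy) -> scf sl cl sy cy b < scf sy cy sy cy b.
Proof.
move=> sy0 hcl hcy same; rewrite -subr_gt0 diff_form.
have G1 := Gpos cl cy b hcl hcy; have G2 := Gpos1 cy b hcy.
case: (ltgtP sy 0) => hsy; last by move: sy0; rewrite hsy eqxx.
- rewrite (ltr0_sg hsy) nmulr_rgt0 //.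
  case: (ltgtP sl 0) => hsl.
  + have [bt ne] : b /\ cl != cy by apply: same; rewrite (ltr0_sg hsl) (ltr0_sg hsy).
    move: bt G1 G2 => -> G1 G2; have := Gdiff cl cy ne.
    rewrite (ltr0_sg hsl); lra.
  + rewrite (gtr0_sg hsl); lra.
  + rewrite hsl sgr0; lra.
- rewrite (gtr0_sg hsy) pmulr_rgt0 //.
  case: (ltgtP sl 0) => hsl.
  + rewrite (ltr0_sg hsl); lra.
  + have [bt ne] : b /\ cl != cy by apply: same; rewrite (gtr0_sg hsl) (gtr0_sg hsy).
    move: bt G1 G2 => -> G1 G2; have := Gdiff cl cy ne.
    rewrite (gtr0_sg hsl); lra.
  + rewrite hsl sgr0; lra.
Qed.

End Key.

Section Net.
Variable R : realType.
Variable p : nat.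
Hypothesis hp : (2 <= p)%N.

Lemma p_gt0' : (0 < p)%N. Proof. by apply: leq_trans hp. Qed.

Lemma pred_correct (sc : 'cV[R]_p) (y : nat) (hy : (y < p)%N) :
  (forall k : 'I_p, (val k != y) -> sc k ord0 < sc (Ordinal hy) ord0) -> correct sc y.
Proof.
move=> H; rewrite /correct /predictor.
case: pickP => [l /forallP Hl | Hn].
- apply/negPn/negP => ne.
  have h1 := H l ne.
  have : Ordinal hy != l by apply/negP => /eqP e; move: ne; rewrite -e eqxx.
  move=> nl; have := Hl (Ordinal hy); rewrite nl /= => h2.
  by move: (lt_trans h1 h2); rewrite ltxx.
- rewrite -(Hn (Ordinal hy)); apply/forallP => k.
  apply/implyP => nk; apply: H; apply/negP => /eqP e; move: nk.
  have ek : k = Ordinal hy by apply: val_inj.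
  by rewrite ek eqxx.
Qed.

Lemma map_entry (f : R -> R) k n (A : 'M[R]_(k, n)) i j : map_mx f A i j = f (A i j).
Proof. by rewrite mxE. Qed.
Lemma add_entry k n (A B : 'M[R]_(k, n)) i j : (A + B) i j = A i j + B i j.
Proof. by rewrite mxE. Qed.

Lemma WX (k m : nat) (W : 'M[R]_(k, p)) (c : 'I_k -> R) (s : m.-tuple 'I_p) i :
  (forall i0 r, W i0 r = c i0 * (r : nat)%:R) ->
  (W *m sampleX R s) i ord0 = c i * (\sum_(j < m) tnth s j)%:R.
Proof.
move=> HW.
rewrite /sampleX mulmx_sumr summxE natr_sum mulr_sumr; apply: eq_bigr => j _.
by rewrite /e_vec -colE !mxE HW.
Qed.

End Net.

Section Part1.
Variable R : realType.
Variable p : nat.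
Hypothesis hp : (2 <= p)%N.

Definition W1 : 'M[R]_(2, p) := \matrix_(i, r) (om R p * (r : nat)%:R).
Definition b1 : 'cV[R]_2 := \col_(i < 2) (if (i : nat) == 0%N then 0 else pi / 2).
Definition V1 : 'M[R]_(p, 2) :=
  \matrix_(l, i) (if (i : nat) == 0%N then Sn R p l else Cn R p l).

Lemma score1 m (s : m.-tuple 'I_p) (l : 'I_p) :
  net_bias W1 V1 b1 (sampleX R s) l ord0 =
  Sn R p l * Sn R p (sampleY s) + Cn R p l * Cn R p (sampleY s).
Proof.
have p0 := @p_gt0' p hp.
rewrite /net_bias mxE !big_ord_recl big_ord0 addr0 /sin_mx.
have HW : forall i r, W1 i r = (fun _ => om R p) i * (r : nat)%:R by move=> i r; rewrite mxE.
rewrite !map_entry !add_entry !(@WX R p 2 m W1 _ s _ HW).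
rewrite !mxE /=.
rewrite addr0 sinDpihalf /sampleY.
by rewrite -Sn_mod // -Cn_mod.
Qed.

Lemma part1 m : (0 < m)%N -> accuracy m (net_bias W1 V1 b1) = 1.
Proof.
have p0 := @p_gt0' p hp.
move=> m0; apply/le_anti/andP; split; first exact: (@acc_le1 R p p0).
have := @acc_ge R p p0 m (net_bias W1 V1 b1) [::] m0.
rewrite /= mul0r subr0; apply => s _.
have hy : (sampleY s < p)%N by rewrite /sampleY ltn_pmod.
apply: (@pred_correct R p _ _ hy) => k nk.
rewrite !score1 /=.
have nk' : ~ (Sn R p k = Sn R p (sampleY s) /\ Cn R p k = Cn R p (sampleY s)).
  by case=> e1 e2; move/eqP: nk; apply; apply: (@SC_inj R p p0 _ _ (ltn_ord k) hy).
have n1 : Cn R p k ^+ 2 + Sn R p k ^+ 2 = 1 := cos2Dsin2 _.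
have n2 : Cn R p (sampleY s) ^+ 2 + Sn R p (sampleY s) ^+ 2 = 1 := cos2Dsin2 _.
have : 0 < (Sn R p k - Sn R p (sampleY s)) ^+ 2 + (Cn R p k - Cn R p (sampleY s)) ^+ 2.
  case: (eqVneq (Sn R p k) (Sn R p (sampleY s))) => es.
    case: (eqVneq (Cn R p k) (Cn R p (sampleY s))) => ec; first by exfalso; apply: nk'.
    by rewrite es subrr expr0n /= add0r exprn_even_gt0 //= subr_eq0 ec.
  have h1 : 0 < (Sn R p k - Sn R p (sampleY s)) ^+ 2 by rewrite exprn_even_gt0 //= subr_eq0.
  have := sqr_ge0 (Cn R p k - Cn R p (sampleY s)); lra.
lra.
Qed.

End Part1.

Section Part2.
Variable R : realType.
Variable p : nat.
Hypothesis hp : (2 <= p)%N.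

Lemma Sn_neg n : (n <= p)%N -> Sn R p (p - n) = - Sn R p n.
Proof.
move=> hn; rewrite /Sn natrB // mulrBr om_p; last by apply: leq_trans hp.
by rewrite addrC sinD2pi sinN.
Qed.

Definition W2 d : 'M[R]_(d, p) := \matrix_(i, r) ((om R p * (i.+1)%:R) * (r : nat)%:R).
Definition V2 d : 'M[R]_(p, d) := \matrix_(l, i)
  (if (i : nat) == 0%N then Num.sg (Sn R p l) * (3 - Cn R p l ^+ 2)
   else if (i : nat) == 1%N then Num.sg (Sn R p l) * Cn R p l else 0).

Lemma score2 d m (s : m.-tuple 'I_p) (l : 'I_p) : (0 < d)%N ->
  net_nobias (W2 d) (V2 d) (sampleX R s) l ord0 =
  @scf R (Sn R p l) (Cn R p l) (Sn R p (sampleY s)) (Cn R p (sampleY s)) (1 < d)%N.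
Proof.
have p0 := @p_gt0' p hp.
have HW : forall i r, W2 d i r = (fun i : 'I_d => om R p * (i.+1)%:R) i * (r : nat)%:R
  by move=> i r; rewrite mxE.
case: d HW => // d HW _.
rewrite /net_nobias mxE big_ord_recl /sin_mx map_entry (@WX R p _ m _ _ s _ HW).
have e1 : sin (om R p * (ord0 : 'I_d.+1).+1%:R * (\sum_(j < m) tnth s j)%:R) = Sn R p (sampleY s).
  by rewrite /= mulr1 /sampleY -Sn_mod.
rewrite e1.
case: d HW e1 => [|d] HW e1.
  by rewrite big_ord0 addr0 mxE /= /scf addr0 mulrA.
rewrite big_ord_recl map_entry (@WX R p _ m _ _ s _ HW).
have e2 : sin (om R p * (lift ord0 (ord0 : 'I_d.+1) : 'I_d.+2).+1%:R * (\sum_(j < m) tnth s j)%:R)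
   = (Cn R p (sampleY s) * Sn R p (sampleY s)) *+ 2.
  rewrite /= -Sn2 -[RHS]/(Sn R p _) -mulrA -natrM; apply: Sn_eqmod => //.
  by rewrite /sampleY modnMmr.
rewrite e2 big1 ?addr0; last first.
  by move=> i _; rewrite !mxE /= mul0r.
rewrite !mxE /= /scf.
have -> : (1 < d.+2)%N = true by [].
rewrite mulr2n; ring.
Qed.

End Part2.

Section Part2b.
Variable R : realType.
Variable p : nat.
Hypothesis hp : (2 <= p)%N.

Lemma opp_contra (a b : R) : a = - b -> Num.sg a = Num.sg b -> b = 0.
Proof.
move=> -> h; apply/eqP; rewrite -sgr_eq0; apply/eqP; move: h; rewrite sgrN; lra.
Qed.

Lemma Cle1 n : Cn R p n ^+ 2 <= 1.
Proof.
have : Cn R p n ^+ 2 + Sn R p n ^+ 2 = 1 := cos2Dsin2 _.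
have := sqr_ge0 (Sn R p n); lra.
Qed.

Lemma part2_good m (s : m.-tuple 'I_p) :
  sampleY s <> 0%N -> (2 * sampleY s <> p)%N ->
  correct (net_nobias (W2 R p (p.-1)./2) (V2 R p (p.-1)./2) (sampleX R s)) (sampleY s).
Proof.
have p0 := @p_gt0' p hp.
move=> y0 y2.
set y := sampleY s.
have hy : (y < p)%N by rewrite /y /sampleY ltn_pmod.
have Sy0 : Sn R p y != 0 by apply: S_ne0.
have d0 : (0 < (p.-1)./2)%N.
  have : (2 <= p.-1)%N by lia.
  by case: (p.-1) => [|[|n]].
apply: (@pred_correct R p _ _ hy) => k nk.
rewrite !score2 //=.
apply: key => //; try exact: Cle1 _.
move=> sg_eq.
have Sk0 : Sn R p k != 0.
  apply/negP => /eqP e; move: sg_eq; rewrite e sgr0 => /esym/eqP.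
  by rewrite sgr_eq0 (negbTE Sy0).
have nk' : (k : nat) <> y by move/eqP: nk.
split.
  rewrite ltnNge; apply/negP => hd.
  have p4 : (p <= 4)%N.
    rewrite leqNgt; apply/negP => h5; move: hd.
    have : (4 <= p.-1)%N by lia.
    by case: (p.-1) => [|[|[|[|n]]]].
  have k0 : (k : nat) <> 0%N by move=> e; move: Sk0; rewrite e Sn0 eqxx.
  have k2 : (2 * k <> p)%N.
    move=> e; move: Sk0; have := @Sn_neg R p hp _ (ltnW (ltn_ord k)).
    have ekk : (p - k = k)%N by lia.
    rewrite ekk => h; have : Sn R p k = 0 by lra.
    by move=> ->; rewrite eqxx.
  have ek : (k : nat) = (p - y)%N by move: (ltn_ord k); lia.
  have := @Sn_neg R p hp _ (ltnW hy); rewrite -ek => h.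
  by move: Sy0; rewrite (opp_contra _ _ h sg_eq) eqxx.
apply/negP => /eqP ec.
have : Sn R p k ^+ 2 == Sn R p y ^+ 2.
  have h1 : Cn R p k ^+ 2 + Sn R p k ^+ 2 = 1 := cos2Dsin2 _.
  have h2 : Cn R p y ^+ 2 + Sn R p y ^+ 2 = 1 := cos2Dsin2 _.
  apply/eqP; move: h1 h2; rewrite ec; lra.
rewrite eqf_sqr => /orP[/eqP es | /eqP es].
  by apply: nk'; apply: (@SC_inj R p p0 _ _ (ltn_ord k) hy).
by move: Sy0; rewrite (opp_contra _ _ es sg_eq) eqxx.
Qed.

End Part2b.

Theorem mainTheorem2 (R : realType) (p : nat) (hp : (2 <= p)%N) :
  (exists (W : 'M[R]_(2, p)) (V : 'M[R]_(p, 2)) (b : 'cV[R]_2),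
     forall m : nat, (2 <= m)%N -> accuracy m (net_bias W V b) = 1)
  /\
  (exists (W : 'M[R]_((p.-1)./2, p)) (V : 'M[R]_(p, (p.-1)./2)),
     forall m : nat, (2 <= m)%N ->
       (odd p -> 1 - p%:R^-1 <= accuracy m (net_nobias W V)) /\
       (~~ odd p -> 1 - 2 / p%:R <= accuracy m (net_nobias W V))).
Proof.
have p0 := @p_gt0' p hp.
split.
  exists (W1 R p), (V1 R p), (b1 R).
  by move=> m hm; apply: part1 => //; apply: leq_trans hm.
exists (W2 R p (p.-1)./2), (V2 R p (p.-1)./2) => m hm.
have m0 : (0 < m)%N by apply: leq_trans hm.
split => hodd.
  have := @acc_ge R p p0 m (net_nobias (W2 R p (p.-1)./2) (V2 R p (p.-1)./2)) [:: 0%N] m0.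
  rewrite /= div1r; apply => s; rewrite inE => /eqP y0.
  apply: part2_good => // e.
  by move: hodd; rewrite -e oddM.
have := @acc_ge R p p0 m (net_nobias (W2 R p (p.-1)./2) (V2 R p (p.-1)./2)) [:: 0%N; p./2] m0.
apply => s; rewrite !inE negb_or => /andP[/eqP y0 /eqP y2].
apply: part2_good => // e.
apply: y2; move: e; move: (sampleY s) => y e.
by rewrite -e mul2n doubleK.
Qed.
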